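(* Let $b>a\ge0$, let $w$ be a palindrome and let $x\in\mathbb{R}$ satisfy $x\ge\phi_w(0)$. Let $m=|10w|$, $v(x)=(x,1)^T$ and for $n\in\mathbb{Z}_+$, $k=1,\dots,m$ define $$x_{nm+k}(x)=\big[M\big((10w)^n(10w)_{1:k}\big)v(x)\big]_2,\qquad y_{nm+k}(x)=\big[M\big((01w)^n(01w)_{1:k}\big)v(x)\big]_2,$$ $\sigma_x^{(n)}=(x_{nm+1}(x),\dots,x_{nm+m}(x))$ and $\sigma_y^{(n)}=(y_{nm+1}(x),\dots,y_{nm+m}(x))$. Then for every $n\in\mathbb{Z}_+$, $\sigma_x^{(n)}$ and $\sigma_y^{(n)}$ are non-decreasing sequences of non-negative reals and $\sigma_x^{(n)}\prec^w\sigma_y^{(n)}$; i.e. $\sum_{k=1}^{j}x_{nm+k}(x)\ge\sum_{k=1}^{j}y_{nm+k}(x)$ for all $j=1,\dots,m$.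
   Context: Words are finite strings over $\{0,1\}$, $\epsilon$ the empty word, $w_k$ the $k$-th letter, $w_{1:k}=w_1\cdots w_k$, $|w|$ the length, $w^n$ the $n$-fold repetition, $\mathbb{Z}_+=\{0,1,2,\dots\}$; a palindrome is a word equal to its reverse. Define $F=\begin{pmatrix}1&1\\ a&1+a\end{pmatrix}$, $G=\begin{pmatrix}1&1\\ b&1+b\end{pmatrix}$, and for a word $w$, $M(w):=M(w_{|w|})\cdots M(w_1)$ with $M(\epsilon)=I$, $M(0)=F$, $M(1)=G$. $[u]_2$ is the second component of a vector $u$. With $\phi_0(x)=\frac{x+1}{ax+a+1}$, $\phi_1(x)=\frac{x+1}{bx+b+1}$ and $\phi_w=\phi_{w_{|w|}}\circ\cdots\circ\phi_{w_1}$, one has $\phi_w(0)=[M(w)]_{12}/[M(w)]_{22}$. For $x,y\in\mathbb{R}^m$ with entries sorted ascending as $x_{(1)}\le\dots\le x_{(m)}$, weak supermajorisation $x\prec^w y$ means $\sum_{k=1}^j x_{(k)}\ge\sum_{k=1}^j y_{(k)}$ for all $j=1,\dots,m$. *)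

(* Defs.v *)
From HB Require Import structures.
From mathcomp Require Import all_boot all_order all_algebra.
Set Implicit Arguments. Unset Strict Implicit. Unset Printing Implicit Defensive.
Import Order.TTheory GRing.Theory Num.Theory.
Local Open Scope ring_scope.

(* Words over {0,1} are bit sequences: letter 0 = false, letter 1 = true. *)
Definition word := seq bool.

Definition palindrome (w : word) : Prop := rev w = w.

Definition Mc {R : nzRingType} (c : R) : 'M[R]_2 :=
  \matrix_(i < 2, j < 2)
    (if (i == 0 :> nat) then 1 else if (j == 0 :> nat) then c else 1 + c).

Definition Mletter {R : nzRingType} (a b : R) (l : bool) : 'M[R]_2 :=
  if l then Mc b else Mc a.

(* M(w) = M(w_|w|) ... M(w_1), M(eps) = I *)
Definition Mword {R : nzRingType} (a b : R) (w : word) : 'M[R]_2 :=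
  foldl (fun A l => Mletter a b l *m A) 1%:M w.

Definition vec {R : nzRingType} (x : R) : 'cV[R]_2 :=
  \col_(i < 2) (if (i == 0 :> nat) then x else 1).

Definition snd2 {R : nzRingType} (u : 'cV[R]_2) : R := u ord_max ord0.

Definition phic {R : fieldType} (c : R) (x : R) : R := (x + 1) / (c * x + c + 1).
Definition philetter {R : fieldType} (a b : R) (l : bool) : R -> R :=
  if l then phic b else phic a.
Definition phiw {R : fieldType} (a b : R) (w : word) (x : R) : R :=
  foldl (fun y l => philetter a b l y) x w.

Definition wsupmaj {R : realFieldType} (x y : seq R) : Prop :=
  size x = size y /\
  forall j : nat, (1 <= j <= size x)%N ->
    \sum_(i < j) (sort <=%R y)`_i <= \sum_(i < j) (sort <=%R x)`_i.

Definition sigma {R : nzRingType} (a b : R) (u : word) (n : nat) (x : R) : seq R :=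
  [seq snd2 (Mword a b (flatten (nseq n u) ++ take k u) *m vec x)
  | k <- iota 1 (size u)].

(* Main.v *)
Require Import Defs.
From HB Require Import structures.
From mathcomp Require Import all_boot all_order all_algebra.
From mathcomp Require Import ring lra.
Set Implicit Arguments. Unset Strict Implicit. Unset Printing Implicit Defensive.
Import Order.TTheory GRing.Theory Num.Theory.
Local Open Scope ring_scope.

Section Q.
Variable R : realFieldType.
Variables a b : R.

Record q4 := Q4 { e11 : R; e12 : R; e21 : R; e22 : R }.

Definition qmul (A B : q4) := Q4 (e11 A * e11 B + e12 A * e21 B) (e11 A * e12 B + e12 A * e22 B)
  (e21 A * e11 B + e22 A * e21 B) (e21 A * e12 B + e22 A * e22 B).
Definition qid := Q4 1 0 0 1.
Definition qMc (c : R) := Q4 1 1 c (1 + c).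
Definition qadj (A : q4) := Q4 (e22 A) (- e12 A) (- e21 A) (e11 A).
Definition qdet (A : q4) := e11 A * e22 A - e12 A * e21 A.
Definition qtr (A : q4) := e11 A + e22 A.
Definition qapp (A : q4) (y : R * R) := (e11 A * y.1 + e12 A * y.2, e21 A * y.1 + e22 A * y.2).
Definition ssum (y : R * R) := y.1 + y.2.
Definition lt_ (l : bool) := if l then b else a.
Definition qstep (A : q4) (l : bool) := qmul (qMc (lt_ l)) A.
Definition qw (s : seq bool) := foldl qstep qid s.

Lemma q4E (A B : q4) : e11 A = e11 B -> e12 A = e12 B -> e21 A = e21 B -> e22 A = e22 B -> A = B.
Proof. by case: A => ????; case: B => ???? /= -> -> -> ->. Qed.

Lemma qmulA A B C : qmul A (qmul B C) = qmul (qmul A B) C.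
Proof. by apply: q4E => /=; ring. Qed.
Lemma qmul1r A : qmul A qid = A.
Proof. by apply: q4E => /=; ring. Qed.
Lemma qmul1l A : qmul qid A = A.
Proof. by apply: q4E => /=; ring. Qed.
Lemma qappM A B y : qapp (qmul A B) y = qapp A (qapp B y).
Proof. rewrite /qapp /=; congr (_, _); ring. Qed.

Lemma foldl_qw s Q : foldl qstep Q s = qmul (qw s) Q.
Proof.
elim: s Q => [|l s IH] Q /=; first by rewrite qmul1l.
rewrite /qw /= IH (IH (qstep qid l)) /qstep qmul1r; by rewrite qmulA.
Qed.

Lemma qw_cat s1 s2 : qw (s1 ++ s2) = qmul (qw s2) (qw s1).
Proof. by rewrite /qw foldl_cat -/(qw s1) foldl_qw. Qed.

Lemma qw_cons l s : qw (l :: s) = qmul (qw s) (qMc (lt_ l)).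
Proof. by rewrite -cat1s qw_cat /qw /= /qstep qmul1r. Qed.

Lemma qw_rcons s l : qw (rcons s l) = qmul (qMc (lt_ l)) (qw s).
Proof. by rewrite -cats1 qw_cat /qw /= /qstep qmul1r. Qed.


Definition Inv (Q : q4) :=
  0 <= e12 Q /\ 0 <= e21 Q /\ 1 <= e11 Q /\ 1 <= e22 Q /\
      qdet Q = 1 /\ 0 <= (e12 Q - e11 Q) + (e22 Q - e21 Q) /\ 1 <= e22 Q - e21 Q.

Lemma Inv_step Q c : 0 <= c -> Inv Q -> Inv (qmul (qMc c) Q).
Proof.
move=> c0 [h1 [h2 [h3 [h4 [h5 [h6 h7]]]]]]; rewrite /Inv /qdet /=.
have hd : (1 * e11 Q + 1 * e21 Q) * (c * e12 Q + (1 + c) * e22 Q) -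
   (1 * e12 Q + 1 * e22 Q) * (c * e11 Q + (1 + c) * e21 Q) = qdet Q.
  by rewrite /qdet; ring.
rewrite hd h5; do 6 (split; first nra); nra.
Qed.

Lemma Inv_qw s : 0 <= a -> 0 <= b -> Inv (qw s).
Proof.
move=> a0 b0.
suff H : forall Q, Inv Q -> Inv (foldl qstep Q s).
  apply: H; rewrite /Inv /qdet /=; do 6 (split; first lra); lra.
elim: s => [|l s IH] Q HQ //=; apply: IH; apply: Inv_step => //; by case: l.
Qed.

Lemma qw_rev s : qw (rev s) = let M := qw s in
  Q4 (e22 M - e21 M) (e22 M + e12 M - e21 M - e11 M) (e21 M) (e21 M + e11 M).
Proof.
elim: s => [|l s IH]; first by apply: q4E => /=; ring.
rewrite rev_cons qw_rcons qw_cons IH /=; apply: q4E => /=; ring.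
Qed.

Lemma qw_pal s : rev s = s -> e22 (qw s) = e11 (qw s) + e21 (qw s).
Proof.
move=> hs; have := qw_rev s; rewrite hs => /(congr1 (@e22)) /= ->. by ring.
Qed.


Lemma philetterE l : philetter a b l = phic (lt_ l).
Proof. by case: l. Qed.

Lemma phiw_qw s p q : 0 <= a -> 0 <= b -> 0 <= p -> 0 < q ->
  phiw a b s (p / q) = (qapp (qw s) (p, q)).1 / (qapp (qw s) (p, q)).2.
Proof.
move=> a0 b0; elim: s p q => [|l s IH] p q p0 q0.
  by rewrite /qw /qapp /= !mul1r !mul0r addr0 add0r.
have c0 : 0 <= lt_ l by case: l.
have -> : phiw a b (l :: s) (p / q) = phiw a b s (philetter a b l (p / q)) by [].
have -> : qapp (qw (l :: s)) (p, q) = qapp (qw s) (p + q, lt_ l * p + (1 + lt_ l) * q).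
  by rewrite qw_cons qappM /qapp /=; congr (_, _); ring.
rewrite philetterE.
have -> : phic (lt_ l) (p / q) = (p + q) / (lt_ l * p + (1 + lt_ l) * q).
  rewrite /phic; have qn : q != 0 by rewrite gt_eqF.
  have dn : lt_ l * p + (1 + lt_ l) * q != 0 by apply/lt0r_neq0; nra.
  have dn' : lt_ l * (p / q) + lt_ l + 1 != 0.
    apply/lt0r_neq0; have : 0 <= p / q by apply: divr_ge0; lra.
    nra.
  field; by rewrite ?qn ?dn ?dn'.
by rewrite IH; [|nra|nra].
Qed.

Definition tomx (Q : q4) : 'M[R]_2 := \matrix_(i < 2, j < 2)
  (if (i == 0 :> nat) then (if (j == 0 :> nat) then e11 Q else e12 Q)
   else (if (j == 0 :> nat) then e21 Q else e22 Q)).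

Lemma Mletter_tomx l Q : Mletter a b l *m tomx Q = tomx (qstep Q l).
Proof.
apply/matrixP => i j; rewrite !mxE !big_ord_recr big_ord0 /= !mxE.
have -> : Mletter a b l = Mc (lt_ l) by case: l.
rewrite /Mc !mxE.
by case: i => [[|[|//]] Hi]; case: j => [[|[|//]] Hj] /=; ring.
Qed.

Lemma Mword_tomx s : Mword a b s = tomx (qw s).
Proof.
rewrite /Mword /qw.
have -> : (1%:M : 'M[R]_2) = tomx qid.
  apply/matrixP => i j; rewrite !mxE.
  by case: i => [[|[|//]] Hi]; case: j => [[|[|//]] Hj] /=.
elim: s qid => [|l s IH] Q //=; by rewrite Mletter_tomx IH.
Qed.

Lemma snd2_qw s y : snd2 (Mword a b s *m vec y) = (qapp (qw s) (y, 1)).2.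
Proof.
rewrite Mword_tomx /snd2 /vec !mxE !big_ord_recr big_ord0 /= !mxE /=.
by rewrite add0r.
Qed.


Lemma qapp1 y : qapp qid y = y.
Proof. by case: y => y1 y2; rewrite /qapp /=; congr (_, _); ring. Qed.

Lemma qw_nseq u n y : qapp (qw (flatten (nseq n u))) y = iter n (qapp (qw u)) y.
Proof.
elim: n y => [|n IH] y /=; first by rewrite /qw /= qapp1.
by rewrite qw_cat qappM IH -iterSr.
Qed.

Definition zit u n x := iter n (qapp (qw u)) (x, 1).

Lemma sigma_nth u n x i : (i < size u)%N ->
  (sigma a b u n x)`_i = (qapp (qw (take i.+1 u)) (zit u n x)).2.
Proof.
move=> hi; rewrite /sigma (nth_map 0%N) ?size_iota // nth_iota // add1n.
by rewrite snd2_qw qw_cat qappM qw_nseq.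
Qed.

Lemma size_sigma u n x : size (sigma a b u n x) = size u.
Proof. by rewrite size_map size_iota. Qed.

Definition hq u z k := ssum (qapp (qw (take k u)) z).

Lemma step_diff c y : ssum (qapp (qMc c) y) - ssum y = (qapp (qMc c) y).2.
Proof. rewrite /ssum /qapp /=; ring. Qed.

Lemma hq_diff u z k : (k < size u)%N ->
  hq u z k.+1 - hq u z k = (qapp (qw (take k.+1 u)) z).2.
Proof.
move=> hk; rewrite /hq (take_nth false hk) qw_rcons !qappM; exact: step_diff.
Qed.

Lemma sigma_sum u n x j : (j <= size u)%N ->
  \sum_(i < j) (sigma a b u n x)`_i = hq u (zit u n x) j - hq u (zit u n x) 0.
Proof.
move=> hj; rewrite -(big_mkord xpredT (fun i => (sigma a b u n x)`_i)).
apply: telescope_sumr_eq => // k /andP [_ hk].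
rewrite sigma_nth ?hq_diff //; exact: (leq_trans hk hj).
Qed.


Definition nn (y : R * R) := 0 <= y.1 /\ 0 <= y.2.

Lemma nn_app Q y : Inv Q -> nn y -> nn (qapp Q y).
Proof.
move=> [h1 [h2 [h3 [h4 _]]]] [y1 y2]; rewrite /nn /qapp /=; split; nra.
Qed.

Lemma nn_zit u n x : 0 <= a -> 0 <= b -> 0 <= x -> nn (zit u n x).
Proof.
move=> a0 b0 x0; rewrite /zit; elim: n => [|n IH] /=; first by rewrite /nn /=; lra.
exact: nn_app (Inv_qw _ a0 b0) IH.
Qed.

Lemma sigma_sorted u n x : 0 <= a -> 0 <= b -> 0 <= x ->
  sorted <=%R (sigma a b u n x) /\ all (fun t => 0 <= t) (sigma a b u n x).
Proof.
move=> a0 b0 x0; have hz := nn_zit u n a0 b0 x0.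
split.
  apply/(sortedP 0) => i; rewrite size_sigma => hi.
  rewrite !sigma_nth ?(ltnW hi) // (take_nth false hi) qw_rcons qappM.
  have := nn_app (Inv_qw (take i.+1 u) a0 b0) hz.
  have c0 : 0 <= lt_ (nth false u i.+1) by case: (nth false u i.+1).
  move: c0; generalize (lt_ (nth false u i.+1)) (qapp (qw (take i.+1 u)) (zit u n x)).
  move=> c [y1 y2] c0 [/= h1 h2]; rewrite /qapp /=; nra.
apply/(all_nthP 0) => i; rewrite size_sigma => hi.
rewrite sigma_nth //; by case: (nn_app (Inv_qw (take i.+1 u) a0 b0) hz).
Qed.


Definition lin (M : q4) (y : R * R) := ssum (qapp M y) - ssum y.

Lemma hq_lin u z j : hq u z j - hq u z 0 = lin (qw (take j u)) z.
Proof. by rewrite /hq /lin take0 /qw /= qapp1. Qed.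

Lemma lin_rec M A y : qdet A = 1 ->
  lin M (qapp A (qapp A y)) = qtr A * lin M (qapp A y) - lin M y.
Proof.
move=> hd; case: y => y1 y2.
have -> : lin M (qapp A (qapp A (y1, y2))) =
   qtr A * lin M (qapp A (y1, y2)) - qdet A * lin M (y1, y2).
  by rewrite /lin /ssum /qapp /qtr /qdet /=; ring.
by rewrite hd mul1r.
Qed.

Lemma lin_adj M A y :
  lin M (qapp A y) = qtr A * lin M y - lin M (qapp (qadj A) y).
Proof. case: y => y1 y2; rewrite /lin /ssum /qapp /qtr /qadj /=; ring. Qed.

Lemma rec_ind (f : nat -> R) t : 2 <= t -> (forall n, f n.+2 = t * f n.+1 - f n) ->
  0 <= f 0 -> f 0 <= f 1 -> forall n, 0 <= f n /\ f n <= f n.+1.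
Proof.
move=> t2 hr h0 h1; elim => [|n [IH1 IH2]]; first by split.
split; first lra.
rewrite hr; nra.
Qed.

Lemma qw_cons2 l1 l2 s :
  qw (l1 :: l2 :: s) = qmul (qw s) (qmul (qMc (lt_ l2)) (qMc (lt_ l1))).
Proof. by rewrite qw_cons qw_cons qmulA. Qed.


Lemma block (w : seq bool) (x : R) (n j : nat) :
  0 <= a -> a < b -> rev w = w -> e12 (qw w) <= x * e22 (qw w) ->
  (1 <= j <= size w + 2)%N ->
  lin (qw (take j (false :: true :: w))) (zit (false :: true :: w) n x) <=
  lin (qw (take j (true :: false :: w))) (zit (true :: false :: w) n x).
Proof.
move=> a0 ab hpal hx hj.
have b0 : 0 <= b by lra.
have hp := qw_pal hpal.
have [p12 [p21 [p11 [p22 [pd _]]]]] := Inv_qw w a0 b0.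
have hA : qw (true :: false :: w) = qmul (qw w) (qmul (qMc a) (qMc b)) by rewrite qw_cons2.
have hB : qw (false :: true :: w) = qmul (qw w) (qmul (qMc b) (qMc a)) by rewrite qw_cons2.
have [_ [_ [_ [_ [hdA _]]]]] := Inv_qw (true :: false :: w) a0 b0.
have [_ [_ [_ [_ [hdB _]]]]] := Inv_qw (false :: true :: w) a0 b0.
have htr : qtr (qw (false :: true :: w)) = qtr (qw (true :: false :: w)).
  rewrite hA hB /qtr /=; rewrite hp; ring.
set t := qtr (qw (true :: false :: w)).
have ht : 2 <= t /\ e22 (qw w) + 1 <= t.
  have -> : t = e11 (qw w) + e22 (qw w) + (e11 (qw w) * b + e12 (qw w) * (a + b + a * b)
     + e21 (qw w) * (2 + b) + e22 (qw w) * (2 * a + b + a * b)).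
    by rewrite /t hA /qtr /=; ring.
  have ab0 := mulr_ge0 a0 b0.
  have h1 : 0 <= e11 (qw w) * b by apply: mulr_ge0; lra.
  have h2 : 0 <= e12 (qw w) * (a + b + a * b) by apply: mulr_ge0; lra.
  have h3 : 0 <= e21 (qw w) * (2 + b) by apply: mulr_ge0; lra.
  have h4 : 0 <= e22 (qw w) * (2 * a + b + a * b) by apply: mulr_ge0; lra.
  lra.
have x0 : 0 <= x.
  have h : 0 <= x * e22 (qw w) by lra.
  rewrite leNgt; apply/negP => hx0; nra.
set MX := qw (take j (true :: false :: w)).
set MY := qw (take j (false :: true :: w)).
pose f k := lin MX (zit (true :: false :: w) k x) - lin MY (zit (false :: true :: w) k x).
have hrec : forall k, f k.+2 = t * f k.+1 - f k.
  move=> k; rewrite /f.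
  have -> : zit (true :: false :: w) k.+2 x = qapp (qw (true :: false :: w))
     (qapp (qw (true :: false :: w)) (zit (true :: false :: w) k x)) by [].
  have -> : zit (false :: true :: w) k.+2 x = qapp (qw (false :: true :: w))
     (qapp (qw (false :: true :: w)) (zit (false :: true :: w) k x)) by [].
  have -> : zit (true :: false :: w) k.+1 x = qapp (qw (true :: false :: w))
     (zit (true :: false :: w) k x) by [].
  have -> : zit (false :: true :: w) k.+1 x = qapp (qw (false :: true :: w))
     (zit (false :: true :: w) k x) by [].
  rewrite (lin_rec _ _ hdA) (lin_rec _ _ hdB) htr -/t.
  lra.
have hf1 : f 1 = t * f 0 - (lin MX (qapp (qadj (qw (true :: false :: w))) (x, 1))
                  - lin MY (qapp (qadj (qw (false :: true :: w))) (x, 1))).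
  rewrite /f.
  have -> : zit (true :: false :: w) 1 x = qapp (qw (true :: false :: w)) (x, 1) by [].
  have -> : zit (false :: true :: w) 1 x = qapp (qw (false :: true :: w)) (x, 1) by [].
  have -> : forall u, zit u 0 x = (x, 1) by [].
  rewrite (lin_adj MX) (lin_adj MY) htr -/t; lra.
suff [F0 F1] : 0 <= f 0 /\ f 0 <= f 1.
  have := rec_ind (proj1 ht) hrec F0 F1 n; rewrite /f; lra.
have d0 : 0 < b - a by lra.
case: j hj @MX @MY @f hrec hf1 => [|[|k]] // hj MX MY f hrec hf1.
  have hq1 : forall l, qw [:: l] = qMc (lt_ l).
    by move=> l; rewrite qw_cons; apply: q4E => /=; ring.
  have F0 : f 0 = (b - a) * (x + 1).
    by rewrite /f /MX /MY /zit /= !hq1 /lin /ssum /qapp /=; ring.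
  have Fm : lin MX (qapp (qadj (qw (true :: false :: w))) (x, 1))
          - lin MY (qapp (qadj (qw (false :: true :: w))) (x, 1))
          = (b - a) * (e22 (qw w) * x - e12 (qw w)).
    by rewrite /MX /MY /= !hq1 hA hB /lin /ssum /qapp /qadj /=; ring.
  rewrite hf1 Fm F0.
  have hy : 0 <= e22 (qw w) * x - e12 (qw w) by lra.
  split; first nra.
  have : (e22 (qw w) + 1) * (x + 1) <= t * (x + 1) by nra.
  nra.
have eX : MX = qmul (qw (take k w)) (qmul (qMc a) (qMc b)).
  rewrite /MX; have -> : take k.+2 (true :: false :: w) = true :: false :: take k w by [].
  by rewrite qw_cons2.
have eY : MY = qmul (qw (take k w)) (qmul (qMc b) (qMc a)).
  rewrite /MY; have -> : take k.+2 (false :: true :: w) = false :: true :: take k w by [].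
  by rewrite qw_cons2.
have hP : qw w = qmul (qw (drop k w)) (qw (take k w)) by rewrite -qw_cat cat_take_drop.
have [r12 [r21 [r11 [r22 [rd _]]]]] := Inv_qw (take k w) a0 b0.
have [_ [_ [_ [_ [_ [sQ _]]]]]] := Inv_qw (drop k w) a0 b0.
have key : (e12 (qw w) + e22 (qw w)) * (e11 (qw (take k w)) + e21 (qw (take k w)))
   - (e11 (qw w) + e21 (qw w)) * (e12 (qw (take k w)) + e22 (qw (take k w)))
   = (e12 (qw (drop k w)) - e11 (qw (drop k w))) + (e22 (qw (drop k w)) - e21 (qw (drop k w))).
  rewrite -[RHS]mulr1 -rd hP /qdet /=; ring.
have F0 : f 0 = (b - a) * ((x + 1) * (e11 (qw (take k w)) + e21 (qw (take k w)))
                 - (e12 (qw (take k w)) + e22 (qw (take k w)))).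
  rewrite /f.
  have -> : forall u, zit u 0 x = (x, 1) by [].
  by rewrite eX eY /lin /ssum /qapp /=; ring.
have Fm : lin MX (qapp (qadj (qw (true :: false :: w))) (x, 1))
        - lin MY (qapp (qadj (qw (false :: true :: w))) (x, 1))
        = (b - a) * (e22 (qw w) * x - e12 (qw w)).
  by rewrite eX eY hA hB /lin /ssum /qapp /qadj /=; ring.
rewrite hf1 Fm F0.
set g := (x + 1) * _ - _.
set y := e22 (qw w) * x - e12 (qw w).
have hy : 0 <= y by rewrite /y; lra.
have hg : e22 (qw w) * g = y * (e11 (qw (take k w)) + e21 (qw (take k w)))
   + ((e12 (qw (drop k w)) - e11 (qw (drop k w))) + (e22 (qw (drop k w)) - e21 (qw (drop k w)))).
  rewrite /g /y -key hp; ring.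
have hyr : y <= y * (e11 (qw (take k w)) + e21 (qw (take k w))).
  have h1 : 0 <= e11 (qw (take k w)) + e21 (qw (take k w)) - 1 by lra.
  have := mulr_ge0 hy h1; lra.
have g0 : 0 <= g.
  rewrite leNgt; apply/negP => hg0; nra.
split; first nra.
have : e22 (qw w) * g <= (t - 1) * g by nra.
nra.
Qed.

End Q.

Unset Implicit Arguments.

Theorem proposition7 (R : realFieldType) (a b : R) (w : seq bool) (x : R) :
  0 <= a -> a < b -> palindrome w -> phiw a b w 0 <= x ->
  forall n : nat,
    let sx := sigma a b ([:: true; false] ++ w) n x in
    let sy := sigma a b ([:: false; true] ++ w) n x in
    [/\ sorted <=%R sx /\ all (fun t => 0 <= t) sx,
        sorted <=%R sy /\ all (fun t => 0 <= t) sy,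
        wsupmaj sx sy &
        forall j : nat, (1 <= j <= size w + 2)%N ->
          \sum_(i < j) sy`_i <= \sum_(i < j) sx`_i].
Proof.
move=> a0 ab hpal hx n sx sy.
have b0 : 0 <= b by lra.
have [p12 [p21 [p11 [p22 _]]]] := Inv_qw w a0 b0.
have hx' : e12 (qw a b w) <= x * e22 (qw a b w).
  have e : phiw a b w 0 = phiw a b w (0 / 1) by rewrite mul0r.
  move: hx; rewrite e phiw_qw ?ltr01 //.
  rewrite /qapp /= !mulr0 !add0r !mulr1 ler_pdivrMr; last by lra.
  by rewrite mulrC.
have x0 : 0 <= x.
  have h : 0 <= x * e22 (qw a b w) by lra.
  rewrite leNgt; apply/negP => hx0; nra.
have hsum : forall j, (1 <= j <= size w + 2)%N ->
    \sum_(i < j) sy`_i <= \sum_(i < j) sx`_i.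
  move=> j hj; rewrite /sx /sy !sigma_sum; last first.
  - by case/andP: hj => _; rewrite /= addn2.
  - by case/andP: hj => _; rewrite /= addn2.
  rewrite !hq_lin; exact: block.
have [s1 s2] := @sigma_sorted R a b ([:: true; false] ++ w) n x a0 b0 x0.
have [s3 s4] := @sigma_sorted R a b ([:: false; true] ++ w) n x a0 b0 x0.
split => //.
split; first by rewrite /sx /sy !size_sigma.
move=> j hj; rewrite !sorted_sort //; try exact: le_trans.
apply: hsum; move: hj; by rewrite /sx size_sigma /= addn2.
Qed.
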